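(* Let $V=\{v_1,\dots,v_n\}$ be a finite set with $n\geq 2$, let $d$ be a monotone and consistent symmetric set function on $V$, let $\tau\in\mathbb{R}$, and let $v_1,\dots,v_n$ be a lax-back order with threshold $\tau$ for $(V,d)$. Then $$\min\{\tau, d(\{v_n\},V\setminus\{v_n\})\}=\min\{\tau,\lambda_{(V,d)}(v_n,v_{n-1})\}.$$
   Context: A symmetric set function $d$ on a finite set $V$ assigns a real number $d(S,T)$ to every ordered pair $(S,T)$ of disjoint subsets of $V$, such that $d(S,T)=d(T,S)$. It is monotone if $d(S,T')\leq d(S,T)$ whenever $S,T$ are disjoint and $T'\subseteq T$; consistent if for all pairwise disjoint $R,S,T$, $d(S,R)\geq d(T,R)$ implies $d(S,R\cup T)\geq d(S\cup R,T)$. For $s,t\in V$, $\lambda_{(V,d)}(s,t)=\min\{d(S,V\setminus S)\mid s\in S\subseteq V,\ t\notin S\}$. Singletons $\{v\}$ may be written $v$. An ordering $v_1,\dots,v_n$ of $V$ is a lax-back order with threshold $\tau$ for $(V,d)$ if $\min\{\tau,d(v_i,\{v_1,\dots,v_{i-1}\})\}\geq\min\{\tau,d(v_j,\{v_1,\dots,v_{i-1}\})\}$ for all $1\leq i<j\leq n$. *)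

(* Defs.v *)
From mathcomp Require Import all_boot all_order all_algebra.
Set Implicit Arguments. Unset Strict Implicit. Unset Printing Implicit Defensive.
Import Order.TTheory GRing.Theory Num.Theory.
Local Open Scope ring_scope.

(* A symmetric set function on V is modelled as a total function
   d : {set V} -> {set V} -> R; all properties are only required on
   (ordered) pairs of disjoint sets, and only such values are used. *)
Section SetFun.
Variables (R : realFieldType) (V : finType).
Implicit Types (d : {set V} -> {set V} -> R).

Definition symmetric_setfun d :=
  forall S T : {set V}, [disjoint S & T] -> d S T = d T S.

Definition monotone_setfun d :=
  forall S T T' : {set V}, [disjoint S & T] -> T' \subset T -> d S T' <= d S T.

Definition consistent_setfun d :=
  forall Q S T : {set V},
    [disjoint Q & S] -> [disjoint S & T] -> [disjoint Q & T] ->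
    d T Q <= d S Q -> d (S :|: Q) T <= d S (Q :|: T).

(* lambda_{(V,d)}(s,t) = min { d(S, V \ S) | s \in S, t \notin S }.
   The seed value d({s}, V\{s}) is itself one of the candidates when s <> t. *)
Definition lambda_vd d (s t : V) : R :=
  \big[Num.min/d [set s] (~: [set s])]_(S : {set V} | (s \in S) && (t \notin S))
     d S (~: S).

(* Ordering v_1..v_n given by a bijection v : 'I_n -> V (0-based: v_{i+1} = v i).
   prefix v i = {v_1, ..., v_i} (0-based: images of indices < i). *)
Definition prefix n (v : 'I_n -> V) (i : nat) : {set V} :=
  v @: [set j : 'I_n | (j < i)%N].

Definition lax_back_order n (v : 'I_n -> V) d (tau : R) :=
  forall i j : 'I_n, (i < j)%N ->
    Num.min tau (d [set v j] (prefix v i)) <= Num.min tau (d [set v i] (prefix v i)).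
End SetFun.

(* Main.v *)
Require Import Defs.
From mathcomp Require Import all_boot all_order all_algebra.
Import Order.TTheory GRing.Theory Num.Theory.
Set Implicit Arguments. Unset Strict Implicit.
Local Open Scope ring_scope.

Definition cutv (R : realFieldType) (V : finType) (d : {set V} -> {set V} -> R) (Z P : {set V}) :=
  d (P :&: Z) (P :\: Z).

Lemma disjID (V : finType) (P Z : {set V}) : [disjoint P :&: Z & P :\: Z].
Proof. by rewrite -setI_eq0; apply/eqP/setP => x; rewrite !inE; case: (x \in Z); rewrite ?andbF. Qed.

Lemma cut_compl (R : realFieldType) (V : finType) (d : {set V} -> {set V} -> R) (Z P : {set V}) :
  symmetric_setfun d -> cutv d (~: Z) P = cutv d Z P.
Proof.
move=> sym; rewrite /cutv sym; last first.
  by rewrite -setI_eq0; apply/eqP/setP => x; rewrite !inE; case: (x \in Z); rewrite ?andbF.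
congr d; apply/setP => x; rewrite !inE ?negbK; case: (x \in Z); rewrite ?andbF ?andbT //.
Qed.

Lemma mono2 (R : realFieldType) (V : finType) (d : {set V} -> {set V} -> R) (S T S' T' : {set V}) :
  symmetric_setfun d -> monotone_setfun d ->
  [disjoint S & T] -> S' \subset S -> T' \subset T -> d S' T' <= d S T.
Proof.
move=> sym mono dST sS sT.
have dS'T : [disjoint S' & T] by apply: disjointWl dST.
apply: le_trans (mono _ _ _ dS'T sT) _.
rewrite (sym S' T) // (sym S T) //.
by apply: mono => //; rewrite disjoint_sym.
Qed.

Lemma step (R : realFieldType) (V : finType) (d : {set V} -> {set V} -> R) (tau : R)
   (Z Pi Pj : {set V}) (u vj : V) :
  symmetric_setfun d -> monotone_setfun d -> consistent_setfun d ->
  u \in Z -> u \notin Pi -> vj |: Pj \subset Pi -> Pi :&: Z \subset Pj ->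
  Num.min tau (d [set u] Pj) <= Num.min tau (d [set vj] Pj) ->
  Num.min tau (d [set vj] Pj) <= Num.min tau (cutv d Z (vj |: Pj)) ->
  Num.min tau (d [set u] Pi) <= Num.min tau (cutv d Z (u |: Pi)).
Proof.
move=> sym mono cons uZ uPi sPj sPiZ H1 H2.
have E : cutv d Z (u |: Pi) = d (u |: (Pi :&: Z)) (Pi :\: Z).
  rewrite /cutv; congr d; apply/setP => x; rewrite !inE;
    (case: eqP => [->|]; [by rewrite uZ ?andbF| by []]).
rewrite E.
have dA : [disjoint Pi :&: Z & Pi :\: Z] by apply: disjID.
have duPi : [disjoint [set u] & Pi] by rewrite disjoints1.
have duA : [disjoint [set u] & Pi :&: Z].
  exact: (disjointWr (subsetIl Pi Z) duPi).
have duC : [disjoint [set u] & Pi :\: Z].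
  exact: (disjointWr (subsetDl Pi Z) duPi).
have sub_u : forall B : {set V}, B \subset Pi -> [disjoint [set u] & B].
  by move=> B sB; exact: (disjointWr sB duPi).
have PiE : Pi :\: Z :|: Pi :&: Z = Pi.
  by apply/setP => x; rewrite !inE; case: (x \in Z); rewrite ?andbF ?andbT ?orbF.
case: (leP (d (Pi :&: Z) [set u]) (d (Pi :&: Z) (Pi :\: Z))) => hc.
  have := cons (Pi :&: Z) (Pi :\: Z) [set u].
  have := duA; rewrite disjoint_sym => duA'.
  have := duC; rewrite disjoint_sym => duC'.
  move=> /(_ dA duC' duA').
  rewrite (sym [set u]) // (sym (Pi :\: Z)); last by rewrite disjoint_sym.
  move=> /(_ hc); rewrite PiE => h.
  apply: le_min2 => //.
  rewrite (sym [set u] Pi) //; apply: (le_trans h).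
  rewrite sym; first by rewrite (setUC (Pi :&: Z)).
  rewrite -setI_eq0; apply/eqP/setP => x; rewrite !inE.
  case: (eqVneq x u) => [->|_]; first by rewrite (negbTE uPi) ?andbF.
  by case: (x \in Z); rewrite ?andbF ?andbT ?orbF.
have sPj' : Pj \subset Pi by apply: subset_trans sPj; apply: subsetUr.
have h3 : d (Pi :&: Z) [set u] <= d [set u] Pj.
  rewrite sym; last by rewrite disjoint_sym.
  by apply: mono => //; apply: sub_u.
have h4 : cutv d Z (vj |: Pj) <= d (Pi :&: Z) (Pi :\: Z).
  exact: (mono2 sym mono dA (setSI Z sPj) (setSD Z sPj)).
have lt1 : cutv d Z (vj |: Pj) < d [set u] Pj.
  by apply: le_lt_trans h4 _; apply: lt_le_trans hc h3.
have tc : tau <= cutv d Z (vj |: Pj).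
  have := le_trans H1 H2; rewrite le_min => /andP [_].
  rewrite ge_min => /orP [//|].
  by rewrite leNgt lt1.
rewrite le_min; apply/andP; split; first by rewrite ge_min lexx.
rewrite ge_min; apply/orP; left.
apply: (le_trans tc); apply: (le_trans h4).
apply: mono2 => //; last by apply: subsetUr.
rewrite -setI_eq0; apply/eqP/setP => x; rewrite !inE.
case: (eqVneq x u) => [->|_]; first by rewrite (negbTE uPi) ?andbF.
  by case: (x \in Z); rewrite ?andbF ?andbT ?orbF.
Qed.
Lemma orient (R : realFieldType) (V : finType) (d : {set V} -> {set V} -> R) (S : {set V}) (u : V) :
  symmetric_setfun d -> exists Z : {set V}, [/\ u \in Z, forall P, cutv d Z P = cutv d S P &
   forall y, (y \in Z) = ((y \in S) == (u \in S))].
Proof.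
move=> sym; case uS: (u \in S).
  by exists S; split => // y; rewrite eqb_id.
exists (~: S); split; [by rewrite inE uS | move=> P; exact: cut_compl | ].
by move=> y; rewrite inE eqbF_neg.
Qed.

Section Ord.


Lemma mem_prefix (V : finType) N (v : 'I_N -> V) (g : V -> 'I_N) (x : V) (i : nat) :
  cancel v g -> cancel g v -> (x \in Defs.prefix v i) = (g x < i)%N.
Proof.
move=> vK gK; rewrite /prefix -{1}(gK x) mem_imset ?inE //; exact: can_inj vK.
Qed.
End Ord.

Theorem corollary1 (R : realFieldType) (V : finType) (n : nat)
  (v : 'I_n.+2 -> V) (d : {set V} -> {set V} -> R) (tau : R) :
  bijective v ->
  symmetric_setfun d -> monotone_setfun d -> consistent_setfun d ->
  lax_back_order v d tau ->
  Num.min tau (d [set v ord_max] (~: [set v ord_max])) =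
  Num.min tau (lambda_vd d (v ord_max) (v (inord n))).
Proof.
move=> [g vK gK] sym mono cons lax.
have mp := fun x i => mem_prefix x i vK gK.
pose w k := v (inord k).
have gw : forall k, (k < n.+2)%N -> g (w k) = k :> nat.
  by move=> k hk; rewrite /w vK inordK.
have wg : forall x, w (g x) = x by move=> x; rewrite /w inord_val gK.
have preS : forall j, (j < n.+2)%N -> Defs.prefix v j.+1 = w j |: Defs.prefix v j.
  move=> j hj; apply/setP => x; rewrite !inE !mp ltnS leq_eqVlt; congr orb.
  apply/eqP/eqP => [h|->]; last by rewrite gw.
  by rewrite -(wg x) h.
have pre0 : Defs.prefix v 0 = set0 by apply/setP => x; rewrite inE mp.
have key : forall S : {set V}, v ord_max \in S -> v (inord n) \notin S ->
    Num.min tau (d [set v ord_max] (~: [set v ord_max])) <= Num.min tau (d S (~: S)).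
  move=> S tS sS.
  pose C j := Num.min tau (d [set w j] (Defs.prefix v j)) <= Num.min tau (cutv d S (Defs.prefix v j.+1)).
  have C0 : C 0%N.
    have [Z [wZ ZE _]] := orient S (w 0%N) sym.
    rewrite /C -ZE (preS 0%N) // pre0 /cutv; apply: le_min2 => //.
    rewrite le_eqVlt; apply/orP; left; apply/eqP; congr d; apply/setP => x; rewrite !inE;
      by case: (eqVneq x (w 0%N)) => [->|]; rewrite ?eqxx ?wZ //= ?orbF ?andbF.
  have stepn : forall i j, (j <= i)%N -> (i.+1 < n.+2)%N -> C j ->
      (forall k, (j <= k <= i)%N -> (w k \in S) = (w j \in S)) ->
      (w i.+1 \in S) != (w j \in S) -> C i.+1.
    move=> i j hji hi Cj same diff.
    have hj : (j < n.+2)%N by apply: leq_ltn_trans hji (ltnW hi).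
    have [Z [uZ ZE Zin]] := orient S (w i.+1) sym.
    rewrite /C -ZE (preS i.+1) //.
    apply: (@step R V d tau Z (Defs.prefix v i.+1) (Defs.prefix v j) (w i.+1) (w j) sym mono cons uZ).
    - by rewrite mp gw // ltnn.
    - apply/subsetP => x; rewrite !inE !mp => /orP [/eqP ->|]; first by rewrite gw // ltnS.
      by move=> h; apply: (leq_trans h); apply: ltnW; rewrite ltnS.
    - apply/subsetP => x; rewrite !inE mp => /andP [hx xZ].
      rewrite mp ltnNge; apply/negP => hjx.
      have := same (g x); rewrite hjx -ltnS hx wg => /(_ isT) xS.
      by move: xZ; rewrite Zin xS eq_sym (negbTE diff).
    - have := lax (inord j) (inord i.+1); rewrite !inordK //; exact.
    - by rewrite ZE -(preS j hj).
  have G : forall i, (i < n.+2)%N -> exists2 j, (j <= i)%N &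
      (C j /\ forall k, (j <= k <= i)%N -> (w k \in S) = (w j \in S)).
    elim => [_|i IH hi].
      by exists 0%N => //; split => // k; rewrite /= leqn0 => /eqP ->.
    have [j hji [Cj same]] := IH (ltnW hi).
    case: (boolP ((w i.+1 \in S) == (w j \in S))) => [/eqP e|ne].
      exists j; first exact: leqW.
      split => // k /andP [hk1 hk2]; move: hk2; rewrite leq_eqVlt => /orP [/eqP -> //|].
      by rewrite ltnS => hk2; apply: same; rewrite hk1 hk2.
    exists i.+1 => //; split; first exact: stepn ne.
    by move=> k; rewrite -eqn_leq => /eqP <-.
  have [j hj [Cj same]] := G n (leqnSn n.+1).
  have em : inord n.+1 = ord_max :> 'I_n.+2 by apply: val_inj; rewrite /= inordK.
  have diff : (w n.+1 \in S) != (w j \in S).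
    by rewrite -(same n) ?leqnn ?hj // /w em tS sS.
  have := stepn n j hj (ltnSn _) Cj same diff.
  have p1 : Defs.prefix v n.+1 = ~: [set v ord_max].
    apply/setP => x; rewrite !inE mp -{2}(gK x) (inj_eq (can_inj vK)).
    rewrite ltn_neqAle -ltnS ltn_ord andbT; by [].
  have p2 : Defs.prefix v n.+2 = setT by apply/setP => x; rewrite !inE mp ltn_ord.
  rewrite /C p1 p2 /w em /cutv setTI setTD; exact.
set x0 := d [set v ord_max] (~: [set v ord_max]).
have up : lambda_vd d (v ord_max) (v (inord n)) <= x0.
  rewrite /lambda_vd; elim/big_rec: _ => // i y _ hy.
  by rewrite ge_min hy orbT.
apply/eqP; rewrite eq_le; apply/andP; split; last by apply: le_min2.
rewrite /lambda_vd; elim/big_rec: _ => // S y /andP [tS sS] hy.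
have := key S tS sS; rewrite !le_min => /andP [h1 h2].
move: hy; rewrite !le_min => /andP [_ h3].
by rewrite h1 h2 h3.
Qed.
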